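(* Let $(C,S)$ be a partially shaded tree, where $C$ is the support tree of a vertex of a non-degenerate transportation polytope $\mathrm{TP}(u,v)$. If some well-connected component of $(C,S)$ contains no open node, then $(C,S)$ is fully shaded.
   Context: Let $N_1,N_2\ge1$, $u\in\mathbb{R}_{>0}^{N_1}$, $v\in\mathbb{R}_{>0}^{N_2}$ with $\sum_iu_i=\sum_jv_j$, and $\mathrm{TP}(u,v)=\{y\in\mathbb{R}^{N_1\times N_2}: \sum_j y_{ij}=u_i\ \forall i,\ \sum_i y_{ij}=v_j\ \forall j,\ y\ge 0\}$. View supply nodes $\sigma^1,\dots,\sigma^{N_1}$ and demand nodes $\delta^1,\dots,\delta^{N_2}$ as the two sides of the complete bipartite graph $K_{N_1,N_2}$; the support graph of $y$ consists of the edges $\{\sigma^i,\delta^j\}$ with $y_{ij}>0$. $\mathrm{TP}(u,v)$ is non-degenerate if there are no nonempty proper subsets $I\subsetneq\{1,\dots,N_1\}$, $J\subsetneq\{1,\dots,N_2\}$ with $\sum_{i\in I}u_i=\sum_{j\in J}v_j$; then the support graph of each vertex is a spanning tree of $K_{N_1,N_2}$, which determines the vertex; these are called trees. Fix a tree $F$ (the final tree). A partially shaded tree is a pair $(C,S)$ where $C$ is a tree and $S\subseteq C\cap F$ is the set of shaded edges (other edges of $C$ are unshaded); it is fully shaded if $S=C$. A supply node $\sigma$ is well-connected in $(C,S)$ if every edge of $F$ incident to $\sigma$ lies in $S$; otherwise it is open. A demand node is well-connected if it is not incident to an unshaded edge of $C$; otherwise it is open. A well-connected edge is a shaded edge incident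 to at least one well-connected node. The well-connected components are the connected components of the graph on all $N_1+N_2$ nodes whose edges are the well-connected edges (in particular a node incident to no well-connected edge forms a component by itself). *)

(* Defs.v *)
From HB Require Import structures.
From mathcomp Require Import all_boot all_order all_algebra.
Set Implicit Arguments. Unset Strict Implicit. Unset Printing Implicit Defensive.
Import Order.TTheory GRing.Theory Num.Theory.
Local Open Scope ring_scope.

Section TP.
Variables (R : realFieldType) (N1 N2 : nat).
Variables (u : 'I_N1 -> R) (v : 'I_N2 -> R).

Definition in_TP (y : 'M[R]_(N1, N2)) : Prop :=
  (forall i, \sum_(j < N2) y i j = u i) /\
  (forall j, \sum_(i < N1) y i j = v j) /\
  (forall i j, 0 <= y i j).

Definition is_vertex (y : 'M[R]_(N1, N2)) : Prop :=
  in_TP y /\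
  forall (y1 y2 : 'M[R]_(N1, N2)) (t : R),
    in_TP y1 -> in_TP y2 -> 0 < t < 1 ->
    y = t *: y1 + (1 - t) *: y2 -> y1 = y2.

Definition non_degenerate : Prop :=
  forall (I : {set 'I_N1}) (J : {set 'I_N2}),
    I != set0 -> I != [set: 'I_N1] -> J != set0 -> J != [set: 'I_N2] ->
    \sum_(i in I) u i <> \sum_(j in J) v j.

(* edges {sigma^i, delta^j} of K_{N1,N2} are pairs (i,j) *)
Definition support (y : 'M[R]_(N1, N2)) : {set 'I_N1 * 'I_N2} :=
  [set e | 0 < y e.1 e.2].

(* a tree: the support graph of a vertex of TP(u,v) *)
Definition is_tree (T : {set 'I_N1 * 'I_N2}) : Prop :=
  exists y, is_vertex y /\ T = support y.
End TP.

Section Shaded.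
Variables (N1 N2 : nat).
Variables (F C S : {set 'I_N1 * 'I_N2}).

(* nodes: inl i = supply node sigma^i, inr j = demand node delta^j *)
Definition node := ('I_N1 + 'I_N2)%type.

Definition supply_wc (i : 'I_N1) : bool :=
  [forall j, ((i, j) \in F) ==> ((i, j) \in S)].

Definition demand_wc (j : 'I_N2) : bool :=
  [forall i, ~~ (((i, j) \in C) && ((i, j) \notin S))].

Definition node_wc (x : node) : bool :=
  match x with inl i => supply_wc i | inr j => demand_wc j end.

Definition node_open (x : node) : bool := ~~ node_wc x.

Definition wc_edge (e : 'I_N1 * 'I_N2) : bool :=
  (e \in S) && (supply_wc e.1 || demand_wc e.2).

Definition wc_adj : rel node := fun a b =>
  match a, b with
  | inl i, inr j => wc_edge (i, j)
  | inr j, inl i => wc_edge (i, j)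
  | _, _ => false
  end.

Definition wc_component (x : node) : pred node := fun z => connect wc_adj x z.
End Shaded.

(* Main.v *)
Require Import Defs.
From HB Require Import structures.
From mathcomp Require Import all_boot all_order all_algebra.
From mathcomp Require Import lra.
Import Order.TTheory GRing.Theory Num.Theory.
Local Open Scope ring_scope.

Section Aux.
Variables (R : realFieldType) (N1 N2 : nat).
Variables (u : 'I_N1 -> R) (v : 'I_N2 -> R).

Lemma sub_sum_le (n : nat) (f : 'I_n -> R) (A : {set 'I_n}) :
  (forall i, 0 <= f i) -> \sum_(i in A) f i <= \sum_i f i.
Proof.
move=> f0; rewrite [X in _ <= X](bigID (mem A)) /=.
by rewrite lerDl sumr_ge0.
Qed.


Lemma sum_full (n : nat) (f : 'I_n -> R) (A : {set 'I_n}) :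
  (forall i, 0 < f i) -> \sum_(i in A) f i = \sum_i f i -> A = setT.
Proof.
move=> fp; rewrite [X in _ = X](bigID (mem A)) /=.
set a := \sum_(i in A) f i; set b := \sum_(i | _) f i => E.
have H : b = 0 by lra.
have H2 : forall i, i \notin A -> f i = 0.
  apply/psumr_eq0P; first by move=> i _; exact: ltW.
  by rewrite /b in H; rewrite H.
apply/setP => i; rewrite inE; case: (boolP (i \in A)) => // iA.
by have := fp i; rewrite H2 // ltxx.
Qed.

Lemma sum_empty (n : nat) (f : 'I_n -> R) (A : {set 'I_n}) :
  (forall i, 0 < f i) -> \sum_(i in A) f i = 0 -> A = set0.
Proof.
move=> fp /eqP H.
have H2 : forall i, i \in A -> f i = 0.
  apply/psumr_eq0P; first by move=> i _; exact: ltW.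
  by apply/eqP.
apply/setP => i; rewrite inE; case: (boolP (i \in A)) => // iA.
by have := fp i; rewrite H2 // ltxx.
Qed.

Lemma tp_le_uv (y : 'M[R]_(N1, N2)) (I : {set 'I_N1}) (J : {set 'I_N2}) :
  in_TP u v y -> (forall i j, i \in I -> 0 < y i j -> j \in J) ->
  \sum_(i in I) u i <= \sum_(j in J) v j.
Proof.
move=> [Hu [Hv H0]] HIJ.
have -> : \sum_(i in I) u i = \sum_(i in I) \sum_(j in J) y i j.
  apply: eq_bigr => i iI; rewrite -(Hu i) (bigID (mem J)) /=.
  rewrite [X in _ + X]big1 ?addr0 // => j jJ.
  apply/eqP; rewrite eq_le H0 andbT leNgt; apply/negP => /(HIJ _ _ iI).
  by rewrite (negbTE jJ).
rewrite exchange_big /=; apply: ler_sum => j _; rewrite -(Hv j).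
exact: sub_sum_le.
Qed.

Lemma tp_le_vu (y : 'M[R]_(N1, N2)) (I : {set 'I_N1}) (J : {set 'I_N2}) :
  in_TP u v y -> (forall i j, j \in J -> 0 < y i j -> i \in I) ->
  \sum_(j in J) v j <= \sum_(i in I) u i.
Proof.
move=> [Hu [Hv H0]] HIJ.
have -> : \sum_(j in J) v j = \sum_(j in J) \sum_(i in I) y i j.
  apply: eq_bigr => j jJ; rewrite -(Hv j) (bigID (mem I)) /=.
  rewrite [X in _ + X]big1 ?addr0 // => i iI.
  apply/eqP; rewrite eq_le H0 andbT leNgt; apply/negP => /(HIJ _ _ jJ).
  by rewrite (negbTE iI).
rewrite exchange_big /=; apply: ler_sum => i _; rewrite -(Hu i).
exact: sub_sum_le.
Qed.
End Aux.

Theorem lemma2 (R : realFieldType) (N1 N2 : nat)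
  (u : 'I_N1 -> R) (v : 'I_N2 -> R) (F C S : {set 'I_N1 * 'I_N2}) :
  (0 < N1)%N -> (0 < N2)%N ->
  (forall i, 0 < u i) -> (forall j, 0 < v j) ->
  \sum_(i < N1) u i = \sum_(j < N2) v j ->
  non_degenerate u v ->
  is_tree u v F -> is_tree u v C ->
  S \subset C :&: F ->
  (exists x : node N1 N2,
     forall z, z \in wc_component F C S x -> ~~ node_open F C S z) ->
  S = C.
Proof.
move=> _ _ up vp tot nd [yF [[TF _] eF]] [yC [[TC _] eC]] SCF [x Hx].
have wc : forall z, connect (wc_adj F C S) x z -> node_wc F C S z.
  by move=> z Hz; have := Hx z Hz; rewrite /node_open negbK.
pose I := [set i | connect (wc_adj F C S) x (inl i)].
pose J := [set j | connect (wc_adj F C S) x (inr j)].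
have HF : forall i j, i \in I -> 0 < yF i j -> j \in J.
  move=> i j; rewrite !inE => iI yp.
  have Fij : (i, j) \in F by rewrite eF inE.
  have swc := wc _ iI; rewrite /= /supply_wc in swc.
  have Sij := implyP (forallP swc j) Fij.
  apply: (connect_trans iI); apply: connect1.
  by rewrite /= /wc_edge /supply_wc Sij /= swc.
have HC : forall i j, j \in J -> 0 < yC i j -> i \in I.
  move=> i j; rewrite !inE => jJ yp.
  have Cij : (i, j) \in C by rewrite eC inE.
  have dwc := wc _ jJ; rewrite /= /demand_wc in dwc.
  have := forallP dwc i; rewrite Cij /= negbK => Sij.
  apply: (connect_trans jJ); apply: connect1.
  by rewrite /= /wc_edge /demand_wc Sij /= dwc orbT.
have eq : \sum_(i in I) u i = \sum_(j in J) v j.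
  apply/eqP; rewrite eq_le (@tp_le_uv R N1 N2 u v yF I J TF HF) (@tp_le_vu R N1 N2 u v yC I J TC HC) //.
have xIJ : (match x with inl i => i \in I | inr j => j \in J end).
  by rewrite /I /J; case: x {Hx wc HF HC eq I J} => [i|j]; rewrite inE connect0.
have I0 : I != set0.
  apply/negP => /eqP I0; move: eq; rewrite I0 big_set0 => /esym/(@sum_empty R _ _ _ vp) J0.
  move: xIJ; rewrite I0 J0; by case: (x) => ?; rewrite inE.
have J0 : J != set0.
  apply/negP => /eqP J0; move: eq; rewrite J0 big_set0 => /(@sum_empty R _ _ _ up) I00.
  by move: I0; rewrite I00 eqxx.
have JT : J = setT.
  case: (boolP (I == setT)) => [/eqP IT|IT].
    apply: (@sum_full R _ _ _ vp); rewrite -eq -tot IT.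
    by apply: eq_bigl => i; rewrite inE.
  case: (boolP (J == setT)) => [/eqP //|JT].
  by exfalso; apply: (nd I J).
apply/eqP; rewrite eqEsubset (subset_trans SCF (subsetIl _ _)) /=.
apply/subsetP => -[i j] Cij.
have jJ : j \in J by rewrite JT inE.
have jc : connect (wc_adj F C S) x (inr j) by move: jJ; rewrite inE.
have dwc := wc _ jc.
rewrite /= /demand_wc in dwc.
by have := forallP dwc i; rewrite Cij /= negbK.
Qed.
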